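(* Let $1\le n\le m$ and, for each unit vector $\mathbf{k}\in S^2\subset\mathbb{R}^3$, let $Q(\mathbf{k})$ be a real $n\times m$ matrix and $R(\mathbf{k})$ a real $m\times n$ matrix, both depending smoothly on $\mathbf{k}$. Define the $(n+m)\times(n+m)$ matrix $$P(\mathbf{k})=\begin{pmatrix}0 & Q(\mathbf{k})\\ R(\mathbf{k}) & 0\end{pmatrix}$$ and the $n\times n$ matrix $M(\mathbf{k}):=Q(\mathbf{k})R(\mathbf{k})$. (a) Fix $\mathbf{k}$. If $M(\mathbf{k})$ is diagonalizable and all its eigenvalues $0<\mu_1<\mu_2<\dots<\mu_l$ are strictly positive, then $P(\mathbf{k})$ is diagonalizable and all its eigenvalues are real and belong to the set $\{0\}\cup\{\pm\sqrt{\mu_j}: j=1,\dots,l\}$. (b) Suppose there exists a family of real symmetric positive-definite $n\times n$ matrices $H_1(\mathbf{k})$, depending smoothly on $\mathbf{k}\in S^2$, such that for all $\mathbf{k}\in S^2$ the matrix $H_1(\mathbf{k})M(\mathbf{k})$ is symmetric (i.e. $H_1(\mathbf{k})M(\mathbf{k})=M(\mathbf{k})^TH_1(\mathbf{k})$) and positive definite. Then there exists a family of real symmetric positive-definite $(n+m)\times(n+m)$ matrices $H(\mathbf{k})$, depending smoothly on $\mathbf{k}\in S^2$, such that $H(\mathbf{k})P(\mathbf{k})=P(\mathbf{k})^TH(\mathbf{k})$ for all $\mathbf{k}\in S^2$ (so that $P$ is strongly hyperbolic in the sense defined in the context).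
   Context: A family of matrices $P(\mathbf{k})$, $\mathbf{k}\in S^2$, is called strongly hyperbolic if there exists a family of symmetric positive-definite matrices $H(\mathbf{k})$ depending smoothly on $\mathbf{k}\in S^2$ such that $H(\mathbf{k})P(\mathbf{k})=P(\mathbf{k})^TH(\mathbf{k})$ for all $\mathbf{k}\in S^2$; if $H$ can be chosen independent of $\mathbf{k}$, it is called symmetric hyperbolic. *)

(* Defs.v *)
From Stdlib Require Import Reals Lra.
Open Scope R_scope.

Definition R3 : Type := (R * R * R)%type.
Definition c1 (x : R3) : R := fst (fst x).
Definition c2 (x : R3) : R := snd (fst x).
Definition c3 (x : R3) : R := snd x.

Definition S2 (x : R3) : Prop := c1 x ^ 2 + c2 x ^ 2 + c3 x ^ 2 = 1.

(* sup-norm distance (induces the usual topology of R^3) *)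
Definition dist3 (x y : R3) : R :=
  Rmax (Rabs (c1 x - c1 y)) (Rmax (Rabs (c2 x - c2 y)) (Rabs (c3 x - c3 y))).

Definition open3 (U : R3 -> Prop) : Prop :=
  forall x, U x -> exists r, 0 < r /\ forall y, dist3 x y < r -> U y.

Definition continuous_on3 (U : R3 -> Prop) (f : R3 -> R) : Prop :=
  forall x, U x -> forall eps, 0 < eps ->
    exists delta, 0 < delta /\
      forall y, U y -> dist3 x y < delta -> Rabs (f y - f x) < eps.

Definition shift3 (i : nat) (x : R3) (t : R) : R3 :=
  match i with
  | O => (c1 x + t, c2 x, c3 x)
  | S O => (c1 x, c2 x + t, c3 x)
  | _ => (c1 x, c2 x, c3 x + t)
  end.

Fixpoint Ck (k : nat) (U : R3 -> Prop) (f : R3 -> R) : Prop :=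
  match k with
  | O => continuous_on3 U f
  | S k' => continuous_on3 U f /\
      exists df : nat -> R3 -> R,
        (forall i x, (i < 3)%nat -> U x ->
           derivable_pt_lim (fun t => f (shift3 i x t)) 0 (df i x)) /\
        (forall i, (i < 3)%nat -> Ck k' U (df i))
  end.

Definition smooth_on (U : R3 -> Prop) (f : R3 -> R) : Prop :=
  forall k, Ck k U f.

(* A function on S^2 (represented by any f : R3 -> R, only values on S^2
   matter) is smooth iff it is the restriction of a smooth function defined
   on an open neighbourhood of S^2. *)
Definition smooth_S2 (f : R3 -> R) : Prop :=
  exists (U : R3 -> Prop) (g : R3 -> R),
    open3 U /\ (forall x, S2 x -> U x) /\ smooth_on U g /\
    (forall x, S2 x -> g x = f x).

(* A matrix is nat -> nat -> R; its dimensions are tracked externally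
   and only entries with indices in range are ever meaningful. *)
Definition mat : Type := nat -> nat -> R.

Fixpoint rsum (n : nat) (f : nat -> R) : R :=
  match n with
  | O => 0
  | S n' => rsum n' f + f n'
  end.

Definition mmul (p : nat) (A B : mat) : mat :=
  fun i j => rsum p (fun k => A i k * B k j).

Definition mtr (A : mat) : mat := fun i j => A j i.

Definition idm : mat := fun i j => if Nat.eqb i j then 1 else 0.

Definition diagm (d : nat -> R) : mat := fun i j => if Nat.eqb i j then d i else 0.

Definition mat_eq (r c : nat) (A B : mat) : Prop :=
  forall i j, (i < r)%nat -> (j < c)%nat -> A i j = B i j.

Definition invertible (N : nat) (S : mat) : Prop :=
  exists T : mat, mat_eq N N (mmul N S T) idm /\ mat_eq N N (mmul N T S) idm.

(* A (N x N) is diagonalized as A = S diag(d) S^-1, i.e. A S = S diag(d),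
   S invertible; then d 0, ..., d (N-1) are the eigenvalues of A. *)
Definition diagonalizes (N : nat) (A S : mat) (d : nat -> R) : Prop :=
  invertible N S /\ mat_eq N N (mmul N A S) (mmul N S (diagm d)).

Definition symmetric (N : nat) (A : mat) : Prop :=
  forall i j, (i < N)%nat -> (j < N)%nat -> A i j = A j i.

Definition pos_def (N : nat) (A : mat) : Prop :=
  forall x : nat -> R, (exists i, (i < N)%nat /\ x i <> 0) ->
    0 < rsum N (fun i => x i * rsum N (fun j => A i j * x j)).

Definition sym_pos_def (N : nat) (A : mat) : Prop :=
  symmetric N A /\ pos_def N A.

Definition smooth_mat (r c : nat) (F : R3 -> mat) : Prop :=
  forall i j, (i < r)%nat -> (j < c)%nat -> smooth_S2 (fun k => F k i j).

(* block matrix P = [[0, Q], [R, 0]] of size (n+m) x (n+m),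
   Q : n x m, R : m x n *)
Definition blockP (n : nat) (Q R' : mat) : mat :=
  fun i j =>
    if Nat.ltb i n then
      (if Nat.ltb j n then 0 else Q i (j - n)%nat)
    else
      (if Nat.ltb j n then R' (i - n)%nat j else 0).

(* Main.v *)
Set Warnings "-notation-overridden,-ambiguous-paths".
From mathcomp Require Import zify.
Require Import Defs.
From Stdlib Require Import Reals Lra Psatz.
From mathcomp Require Import all_boot all_algebra.
From mathcomp Require Import Rstruct.
Set Warnings "-notation-overridden,-ambiguous-paths".
Open Scope R_scope.
Ltac tostd := rewrite -?RplusE -?RminusE -?RoppE -?RmultE -?R0E -?R1E.
Lemma shift3_0 i x : shift3 i x 0 = x.
Proof.
destruct x as [[a b] c]; unfold shift3, c1, c2, c3; simpl.
destruct i as [|[|i]]; rewrite Rplus_0_r; reflexivity.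
Qed.

Lemma cont_const U a : continuous_on3 U (fun _ => a).
Proof.
intros x _ eps He; exists 1; split; [lra|]; intros y _ _.
rewrite Rminus_diag Rabs_R0; exact He.
Qed.

Lemma cont_plus U f g : continuous_on3 U f -> continuous_on3 U g ->
  continuous_on3 U (fun x => f x + g x).
Proof.
intros Hf Hg x Ux eps He.
destruct (Hf x Ux (eps/2)) as [d1 [Hd1 H1]]; [lra|].
destruct (Hg x Ux (eps/2)) as [d2 [Hd2 H2]]; [lra|].
exists (Rmin d1 d2); split; [apply Rmin_pos; lra|].
intros y Uy Hy.
assert (A1 := H1 y Uy (Rlt_le_trans _ _ _ Hy (Rmin_l _ _))).
assert (A2 := H2 y Uy (Rlt_le_trans _ _ _ Hy (Rmin_r _ _))).
replace (f y + g y - (f x + g x)) with ((f y - f x) + (g y - g x)) by ring.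
eapply Rle_lt_trans; [apply Rabs_triang|]; lra.
Qed.

Lemma cont_mult U f g : continuous_on3 U f -> continuous_on3 U g ->
  continuous_on3 U (fun x => f x * g x).
Proof.
intros Hf Hg x Ux eps He.
set (a := Rabs (f x) + 1). set (b := Rabs (g x) + 1).
assert (Ha : 0 < a) by (unfold a; pose proof (Rabs_pos (f x)); lra).
assert (Hb : 0 < b) by (unfold b; pose proof (Rabs_pos (g x)); lra).
destruct (Hf x Ux (Rmin 1 (eps/(2*b)))) as [d1 [Hd1 H1]].
{ apply Rmin_pos; [lra|]. apply Rdiv_lt_0_compat; lra. }
destruct (Hg x Ux (eps/(2*a))) as [d2 [Hd2 H2]].
{ apply Rdiv_lt_0_compat; lra. }
exists (Rmin d1 d2); split; [apply Rmin_pos; lra|].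
intros y Uy Hy.
assert (A1 := H1 y Uy (Rlt_le_trans _ _ _ Hy (Rmin_l _ _))).
assert (A2 := H2 y Uy (Rlt_le_trans _ _ _ Hy (Rmin_r _ _))).
set (u := f y - f x) in *. set (v := g y - g x) in *.
assert (U1 : Rabs u < 1) by (eapply Rlt_le_trans; [exact A1| apply Rmin_l]).
assert (U2 : Rabs u < eps/(2*b)) by (eapply Rlt_le_trans; [exact A1| apply Rmin_r]).
assert (U2' : Rabs u * (2*b) < eps).
{ apply (Rmult_lt_compat_r (2*b)) in U2; [|lra].
  replace (eps / (2*b) * (2*b)) with eps in U2 by (field; lra). exact U2. }
assert (V2' : Rabs v * (2*a) < eps).
{ apply (Rmult_lt_compat_r (2*a)) in A2; [|lra].
  replace (eps / (2*a) * (2*a)) with eps in A2 by (field; lra). exact A2. }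
replace (f y * g y - f x * g x) with (u * g x + f y * v) by (unfold u, v; ring).
assert (Fy : Rabs (f y) <= a).
{ replace (f y) with (f x + u) by (unfold u; ring).
  eapply Rle_trans; [apply Rabs_triang|]. unfold a; lra. }
assert (Gx : Rabs (g x) < b) by (unfold b; lra).
eapply Rle_lt_trans; [apply Rabs_triang|]. rewrite !Rabs_mult.
pose proof (Rabs_pos u). pose proof (Rabs_pos v). pose proof (Rabs_pos (f y)).
pose proof (Rabs_pos (g x)).
nra.
Qed.

Lemma cont_mono U V f : (forall x, V x -> U x) -> continuous_on3 U f -> continuous_on3 V f.
Proof.
intros HVU Hf x Vx eps He. destruct (Hf x (HVU x Vx) eps He) as [d [Hd H]].
exists d; split; auto.
Qed.

Lemma Ck_cont k U f : Ck k U f -> continuous_on3 U f.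
Proof. destruct k; simpl; tauto. Qed.

Lemma Ck_weaken k U f : Ck (S k) U f -> Ck k U f.
Proof.
revert f; induction k as [|k IH]; intros f H.
- exact (proj1 H).
- destruct H as [Hc [df [Hd Hk]]]. split; [exact Hc|].
  exists df; split; [exact Hd|]. intros i Hi. apply IH, Hk, Hi.
Qed.

Lemma Ck_mono k U V f : (forall x, V x -> U x) -> Ck k U f -> Ck k V f.
Proof.
intros HVU; revert f; induction k as [|k IH]; intros f H.
- exact (cont_mono _ _ _ HVU H).
- destruct H as [Hc [df [Hd Hk]]]. split; [exact (cont_mono _ _ _ HVU Hc)|].
  exists df; split.
  + intros i x Hi Vx; apply Hd; auto.
  + intros i Hi; apply IH, Hk, Hi.
Qed.

Lemma Ck_const k U a : Ck k U (fun _ => a).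
Proof.
revert a; induction k as [|k IH]; intros a.
- apply cont_const.
- split; [apply cont_const|]. exists (fun _ _ => 0). split.
  + intros i x _ _. apply (derivable_pt_lim_const a).
  + intros; apply IH.
Qed.

Lemma Ck_plus k U f g : Ck k U f -> Ck k U g -> Ck k U (fun x => f x + g x).
Proof.
revert f g; induction k as [|k IH]; intros f g Hf Hg.
- exact (cont_plus _ _ _ Hf Hg).
- destruct Hf as [Hfc [df [Hfd Hfk]]]. destruct Hg as [Hgc [dg [Hgd Hgk]]].
  split; [exact (cont_plus _ _ _ Hfc Hgc)|].
  exists (fun i x => df i x + dg i x). split.
  + intros i x Hi Ux.
    exact (derivable_pt_lim_plus (fun t => f (shift3 i x t)) (fun t => g (shift3 i x t))
             0 _ _ (Hfd i x Hi Ux) (Hgd i x Hi Ux)).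
  + intros i Hi. apply IH; auto.
Qed.

Lemma Ck_mult k U f g : Ck k U f -> Ck k U g -> Ck k U (fun x => f x * g x).
Proof.
revert f g; induction k as [|k IH]; intros f g Hf Hg.
- exact (cont_mult _ _ _ Hf Hg).
- assert (Hfw := Ck_weaken _ _ _ Hf). assert (Hgw := Ck_weaken _ _ _ Hg).
  destruct Hf as [Hfc [df [Hfd Hfk]]]. destruct Hg as [Hgc [dg [Hgd Hgk]]].
  split; [exact (cont_mult _ _ _ Hfc Hgc)|].
  exists (fun i x => df i x * g x + f x * dg i x). split.
  + intros i x Hi Ux.
    pose proof (derivable_pt_lim_mult (fun t => f (shift3 i x t)) (fun t => g (shift3 i x t))
             0 _ _ (Hfd i x Hi Ux) (Hgd i x Hi Ux)) as D.
    rewrite shift3_0 in D. exact D.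
  + intros i Hi. apply Ck_plus; apply IH; auto.
Qed.

Lemma open3_inter U V : open3 U -> open3 V -> open3 (fun x => U x /\ V x).
Proof.
intros HU HV x [Ux Vx].
destruct (HU x Ux) as [r1 [Hr1 H1]]. destruct (HV x Vx) as [r2 [Hr2 H2]].
exists (Rmin r1 r2); split; [apply Rmin_pos; lra|].
intros y Hy; split.
- apply H1; eapply Rlt_le_trans; [exact Hy| apply Rmin_l].
- apply H2; eapply Rlt_le_trans; [exact Hy| apply Rmin_r].
Qed.

Lemma smooth_ext f g : smooth_S2 f -> (forall k, S2 k -> f k = g k) -> smooth_S2 g.
Proof.
intros [U [h [HU [HS [Hh He]]]]] Hfg. exists U, h; repeat split; auto.
intros x Sx; rewrite He //; apply Hfg, Sx.
Qed.

Lemma smooth_const a : smooth_S2 (fun _ => a).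
Proof.
exists (fun _ => True), (fun _ => a); repeat split; auto.
- intros x _; exists 1; split; [lra|auto].
- intros k; apply Ck_const.
Qed.

Lemma smooth_plus f g : smooth_S2 f -> smooth_S2 g -> smooth_S2 (fun k => f k + g k).
Proof.
intros [U [h [HU [HS [Hh He]]]]] [V [h' [HV [HS' [Hh' He']]]]].
exists (fun x => U x /\ V x), (fun x => h x + h' x); repeat split.
- apply open3_inter; auto.
- auto.
- auto.
- intros k; apply Ck_plus; eapply Ck_mono; [| apply Hh| | apply Hh']; simpl; tauto.
- intros x Sx; rewrite He // He' //.
Qed.

Lemma smooth_mult f g : smooth_S2 f -> smooth_S2 g -> smooth_S2 (fun k => f k * g k).
Proof.
intros [U [h [HU [HS [Hh He]]]]] [V [h' [HV [HS' [Hh' He']]]]].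
exists (fun x => U x /\ V x), (fun x => h x * h' x); repeat split.
- apply open3_inter; auto.
- auto.
- auto.
- intros k; apply Ck_mult; eapply Ck_mono; [| apply Hh| | apply Hh']; simpl; tauto.
- intros x Sx; rewrite He // He' //.
Qed.

Lemma smooth_opp f : smooth_S2 f -> smooth_S2 (fun k => - f k).
Proof.
intros H. apply (smooth_ext (fun k => (-1) * f k)).
- apply smooth_mult; [apply smooth_const|exact H].
- intros; ring.
Qed.
Import GRing.Theory Num.Theory.
Open Scope ring_scope.

Definition tomx r c (A : mat) : 'M[R]_(r, c) := \matrix_(i < r, j < c) A i j.
Definition ofmx r c (M : 'M[R]_(r, c)) : mat := fun i j =>
  match (insub i : option 'I_r), (insub j : option 'I_c) with
  | Some i', Some j' => M i' j'
  | _, _ => 0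
  end.
Arguments ofmx {r c}.

Lemma ofmxE r c (M : 'M[R]_(r, c)) (i : 'I_r) (j : 'I_c) : ofmx M i j = M i j.
Proof. by rewrite /ofmx !valK. Qed.

Lemma ofmxK r c (M : 'M[R]_(r, c)) : tomx r c (ofmx M) = M.
Proof. by apply/matrixP => i j; rewrite mxE ofmxE. Qed.

Lemma rsum_big p f : rsum p f = \sum_(i < p) f i.
Proof. by elim: p => [|p IH] /=; rewrite ?big_ord0 // big_ord_recr IH. Qed.

Lemma tomx_mul r p c A B : tomx r c (mmul p A B) = tomx r p A *m tomx p c B.
Proof.
apply/matrixP => i j; rewrite !mxE /mmul rsum_big; apply: eq_bigr => k _.
by rewrite !mxE.
Qed.

Lemma mat_eq_tomx r c A B : mat_eq r c A B <-> tomx r c A = tomx r c B.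
Proof.
split.
- move=> H; apply/matrixP => i j; rewrite !mxE; apply: H; apply/ltP; exact: ltn_ord.
- move=> H i j Hi Hj.
  have := congr1 (fun M : 'M_(r, c) => M (Ordinal (introT ltP Hi)) (Ordinal (introT ltP Hj))) H.
  by rewrite !mxE.
Qed.

Lemma tomx_idm N : tomx N N idm = 1%:M.
Proof.
apply/matrixP => i j; rewrite !mxE /idm.
case: (eqVneq i j) => [->|neq]; first by rewrite Nat.eqb_refl.
have : (nat_of_ord i <> nat_of_ord j) by move=> E; move: neq; rewrite (ord_inj E) eqxx.
by move/Nat.eqb_neq => ->.
Qed.

Lemma tomx_diagm N d : tomx N N (diagm d) = diag_mx (\row_(i < N) d i).
Proof.
apply/matrixP => i j; rewrite !mxE /diagm.
case: (eqVneq i j) => [->|neq]; first by rewrite Nat.eqb_refl.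
have : (nat_of_ord i <> nat_of_ord j) by move=> E; move: neq; rewrite (ord_inj E) eqxx.
by move/Nat.eqb_neq => ->.
Qed.

Lemma invertible_unit N S : invertible N S -> tomx N N S \in unitmx.
Proof.
move=> [T [H1 _]]. move/mat_eq_tomx: H1; rewrite tomx_mul tomx_idm => /mulmx1_unit [].
done.
Qed.

Lemma unit_invertible N (V : 'M[R]_N) : V \in unitmx -> invertible N (ofmx V).
Proof.
move=> Vu; exists (ofmx (invmx V)); split; apply/mat_eq_tomx;
  by rewrite tomx_mul !ofmxK tomx_idm ?mulmxV ?mulVmx.
Qed.

Lemma tomx_blockP n m Q R' :
  tomx (n + m) (n + m) (blockP n Q R') = block_mx 0 (tomx n m Q) (tomx m n R') 0.
Proof.
apply/matrixP => i j; rewrite [LHS]mxE /blockP.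
rewrite /block_mx /col_mx /row_mx.
rewrite mxE; case: splitP => i' Ei; rewrite mxE; case: splitP => j' Ej; rewrite !mxE.
- have -> : Nat.ltb i n = true by apply/Nat.ltb_lt; rewrite Ei; apply/ltP.
  have -> : Nat.ltb j n = true by apply/Nat.ltb_lt; rewrite Ej; apply/ltP.
  done.
- have -> : Nat.ltb i n = true by apply/Nat.ltb_lt; rewrite Ei; apply/ltP.
  have -> : Nat.ltb j n = false by apply/Nat.ltb_ge; rewrite Ej; apply/leP; exact: leq_addr.
  by rewrite Ei Ej minusE addKn.
- have -> : Nat.ltb i n = false by apply/Nat.ltb_ge; rewrite Ei; apply/leP; exact: leq_addr.
  have -> : Nat.ltb j n = true by apply/Nat.ltb_lt; rewrite Ej; apply/ltP.
  by rewrite Ei Ej minusE addKn.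
- have -> : Nat.ltb i n = false by apply/Nat.ltb_ge; rewrite Ei; apply/leP; exact: leq_addr.
  have -> : Nat.ltb j n = false by apply/Nat.ltb_ge; rewrite Ej; apply/leP; exact: leq_addr.
  done.
Qed.
Import GRing.Theory Num.Theory.
Open Scope ring_scope.

Lemma blk_prod a b (A : 'M[R]_a) (B : 'M[R]_b) (s : seq R) :
  \prod_(x <- s) (block_mx A 0 0 B - x%:M : 'M_(a + b))
  = block_mx (\prod_(x <- s) (A - x%:M)) 0 0 (\prod_(x <- s) (B - x%:M)).
Proof.
elim: s => [|x s IH]; first by rewrite !big_nil -scalar_mx_block.
rewrite !big_cons IH (scalar_mx_block a b x) opp_block_mx add_block_mx.
rewrite -!mulmxE mulmx_block !oppr0 !addr0 !mul0mx !mulmx0 !addr0 !add0r.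
by rewrite !mulmxE.
Qed.

Lemma Q_comm a b (Q : 'M[R]_(a, b)) (Rm : 'M[R]_(b, a)) (s : seq R) :
  Q *m \prod_(x <- s) (Rm *m Q - x%:M) = \prod_(x <- s) (Q *m Rm - x%:M) *m Q.
Proof.
elim: s => [|x s IH]; first by rewrite !big_nil mulmx1 mul1mx.
rewrite !big_cons.
set P1 := \prod_(y <- s) _. set P2 := \prod_(y <- s) _.
rewrite -!mulmxE -mulmxA -IH !mulmxA mulmxBl mulmxBr mulmxA scalar_mxC.
done.
Qed.

Lemma annih a b (Q : 'M[R]_(a, b)) (Rm : 'M[R]_(b, a)) (s : seq R) :
  \prod_(x <- s) (Q *m Rm - x%:M) = 0 ->
  (block_mx 0 Q Rm 0 : 'M_(a + b)) * \prod_(x <- s) ((block_mx 0 Q Rm 0 : 'M_(a + b)) ^+ 2 - x%:M) = 0.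
Proof.
move=> H0.
have -> : (block_mx 0 Q Rm 0 : 'M_(a + b)) ^+ 2 = block_mx (Q *m Rm) 0 0 (Rm *m Q).
  by rewrite expr2 -mulmxE mulmx_block !mul0mx !mulmx0 !add0r !addr0.
rewrite blk_prod H0 -mulmxE mulmx_block ?mul0mx ?mulmx0 ?add0r ?addr0 Q_comm H0 mul0mx.
by rewrite block_mx0.
Qed.

Lemma sqrt_sq2 (x : R) : Rlt 0 x -> x = sqrt x ^+ 2.
Proof. move=> hx; rewrite expr2; symmetry; apply: sqrt_sqrt; tostd; lra. Qed.

Lemma part_a_core n' m (Q : 'M[R]_(n'.+1, m)) (Rm : 'M[R]_(m, n'.+1))
  (S : 'M[R]_n'.+1) (mu : 'rV[R]_n'.+1) :
  S \in unitmx -> Q *m Rm *m S = S *m diag_mx mu -> (forall j, Rlt 0 (mu 0 j)) ->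
  exists (W : 'M[R]_((n' + m).+1)) (d : 'rV[R]_((n' + m).+1)),
    W \in unitmx /\ (block_mx 0 Q Rm 0 : 'M_((n' + m).+1)) *m W = W *m diag_mx d /\
    forall i, d 0 i = 0 \/ exists j, d 0 i = sqrt (mu 0 j) \/ d 0 i = - sqrt (mu 0 j).
Proof.
move=> Su HS mupos.
set M := Q *m Rm.
have HM : M = conjmx S (diag_mx mu) by rewrite conjumx // -HS mulmxK.
set rs := undup [seq mu 0 i | i <- enum 'I_n'.+1].
have rspos : forall x, x \in rs -> Rlt 0 x.
  by move=> x; rewrite mem_undup => /mapP [i _ ->].
have Hmin : mxminpoly M = \prod_(x <- rs) ('X - x%:P).
  by rewrite HM mxminpoly_uconj // mxminpoly_diag.
have Mroot : \prod_(x <- rs) (M - x%:M) = 0.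
  have := mx_root_minpoly M; rewrite Hmin rmorph_prod /=.
  by under eq_bigr do rewrite rmorphB /= horner_mx_X horner_mx_C.
set P : 'M[R]_((n' + m).+1) := block_mx 0 Q Rm 0.
set rsP := 0 :: [seq sqrt x | x <- rs] ++ [seq - sqrt x | x <- rs].
set q := \prod_(r <- rsP) ('X - r%:P).
have Hq : q = 'X * \prod_(x <- rs) ('X ^+ 2 - x%:P).
  rewrite /q /rsP big_cons big_cat /= !big_map polyC0 subr0 -big_split /=; congr (_ * _).
  apply: eq_big_seq => x xin.
  rewrite polyCN opprK -subr_sqr -polyC_exp -sqrt_sq2 //; exact: rspos.
have hP : horner_mx P q = 0.
  rewrite Hq rmorphM rmorph_prod /= horner_mx_X.
  under eq_bigr do rewrite rmorphB /= rmorphXn /= horner_mx_X horner_mx_C.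
  have HH := @annih _ _ Q Rm rs Mroot. exact HH.
have dvq : mxminpoly P %| q by apply: mxminpoly_min.
have urs : uniq rsP.
  have h1 : 0 \notin [seq sqrt x | x <- rs].
    apply/mapP => -[x /rspos xp E]. move: (sqrt_lt_R0 _ xp) E; tostd; lra.
  have h2 : 0 \notin [seq - sqrt x | x <- rs].
    apply/mapP => -[x /rspos xp E]. move: (sqrt_lt_R0 _ xp) E; tostd; lra.
  have h3 : ~~ has (fun y => y \in [seq sqrt x0 | x0 <- rs]) [seq - sqrt x | x <- rs].
    apply/hasP => -[y /mapP [x /rspos xp ->] /mapP [z /rspos zp E]].
    move: (sqrt_lt_R0 _ xp) (sqrt_lt_R0 _ zp) E; tostd; lra.
  rewrite /rsP cons_uniq mem_cat negb_or cat_uniq !map_inj_in_uniq ?undup_uniq ?h1 ?h2 ?h3 //.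
  - move=> x z /rspos xp /rspos zp; tostd => E. apply: sqrt_inj; lra.
  - move=> x z /rspos xp /rspos zp; tostd => E. apply: sqrt_inj; lra.
have : diagonalizable P by apply/diagonalizableP; exists rsP.
move=> [V Vu /(diagonalizable_forLR Vu) [d Hd]].
exists (invmx V), d; split; first by rewrite unitmx_inv.
split.
  by rewrite Hd mxpoly.conjumx ?unitmx_inv // invmxK mulmxK.
move=> i.
have Hmp : mxminpoly P = \prod_(x <- undup [seq d 0 j | j <- enum 'I_(n' + m).+1]) ('X - x%:P).
  by rewrite Hd mxminpoly_uconj ?unitmx_inv // mxminpoly_diag.
have : root q (d 0 i).
  apply: (root_dvdp dvq); rewrite Hmp root_prod_XsubC mem_undup.
  by apply: map_f; rewrite mem_enum.
rewrite /q root_prod_XsubC /rsP inE mem_cat => /orP [/eqP -> | /orP [] /mapP [x]]; first by left.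
- rewrite mem_undup => /mapP [j _ ->] ->; right; exists j; by left.
- rewrite mem_undup => /mapP [j _ ->] ->; right; exists j; by right.
Qed.

Lemma part_a n m (Q R' : mat) : (1 <= n)%coq_nat ->
  forall (SM : mat) (mu : nat -> R),
    diagonalizes n (mmul m Q R') SM mu ->
    (forall j, (j < n)%coq_nat -> Rlt 0 (mu j)) ->
    exists (SP : mat) (lam : nat -> R),
      diagonalizes (n + m) (blockP n Q R') SP lam /\
      forall i, (i < n + m)%coq_nat ->
        lam i = 0 \/
        exists j, (j < n)%coq_nat /\ (lam i = sqrt (mu j) \/ lam i = - sqrt (mu j)).
Proof.
case: n => [|n'] Hn; first by inversion Hn.
move=> SM mu [Hinv Heq] Hpos.
have Su := invertible_unit _ _ Hinv.
move/mat_eq_tomx: Heq; rewrite !tomx_mul tomx_diagm => Heq.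
have Hpos' : forall j : 'I_n'.+1, Rlt 0 ((\row_(i < n'.+1) mu i) 0 j).
  move=> j; rewrite mxE; apply: Hpos; apply/ltP; exact: ltn_ord.
have [W [d [Wu [HW Hd]]]] := part_a_core _ _ _ _ _ _ Su Heq Hpos'.
exists (ofmx W), (fun i => match (insub i : option 'I_((n' + m).+1)) with Some i' => d 0 i' | None => 0 end).
split.
- split; first exact: (unit_invertible _ _ Wu).
  apply/mat_eq_tomx; rewrite !tomx_mul tomx_blockP tomx_diagm ofmxK.
  have -> : \row_(i < (n' + m).+1) (match (insub (i : nat) : option 'I_((n' + m).+1)) with Some i' => d 0 i' | None => 0 end) = d.
    by apply/matrixP => i j; rewrite !mxE (ord1 i) valK.
  exact: HW.
- move=> i Hi.
  have Hi' : (i < n'.+1 + m)%N by apply/ltP.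
  rewrite insubT /=.
  case: (Hd (Ordinal Hi')) => [->|[j Hj]]; first by left.
  right; exists j; split; last by rewrite !mxE in Hj.
  apply/ltP; exact: ltn_ord.
Qed.
Import mathcomp.order.order.Order.TTheory.

Definition qf k (y : 'rV[R]_k) (A : 'M[R]_k) : R := (y *m (A *m y^T)) 0 0.
Arguments qf {k}.
Definition pdm k (A : 'M[R]_k) := forall v : 'rV[R]_k, v != 0 -> 0 < qf v A.
Arguments pdm {k}.

Lemma sq_ge0 k (y : 'rV[R]_k) : 0 <= (y *m y^T) 0 0.
Proof.
rewrite mxE; apply: sumr_ge0 => i _; rewrite mxE -expr2; exact: sqr_ge0.
Qed.

Lemma sq_gt0 k (y : 'rV[R]_k) : y != 0 -> 0 < (y *m y^T) 0 0.
Proof.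
move=> ny; rewrite lt0r sq_ge0 andbT; apply: contra ny => /eqP H.
rewrite mxE in H.
have H' : forall i, true -> y 0 i * y^T i 0 = 0.
  apply/psumr_eq0P => // i _; rewrite mxE -expr2; exact: sqr_ge0.
apply/eqP/rowP => i; rewrite mxE; have := H' i isT; rewrite mxE.
by move/eqP; rewrite mulf_eq0 orbb => /eqP.
Qed.

Lemma pdm_ge0 k (A : 'M[R]_k) (y : 'rV_k) : pdm A -> 0 <= qf y A.
Proof.
move=> hA; case: (eqVneq y 0) => [->|ny]; last exact/ltW/hA.
by rewrite /qf mul0mx mxE.
Qed.

Lemma qf_block n m (A : 'M[R]_n) (B : 'M[R]_m) (v : 'rV_(n + m)) :
  qf v (block_mx A 0 0 B) = qf (lsubmx v) A + qf (rsubmx v) B.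
Proof.
rewrite /qf -{1 2}(hsubmxK v) tr_row_mx mul_block_col !mul0mx addr0 add0r.
by rewrite mul_row_col mxE.
Qed.

Lemma part_b_core n m (Q : 'M[R]_(n, m)) (Rm : 'M[R]_(m, n)) (H1 : 'M[R]_n) :
  H1^T = H1 -> pdm H1 -> (H1 *m (Q *m Rm))^T = H1 *m (Q *m Rm) -> pdm (H1 *m (Q *m Rm)) ->
  let M := Q *m Rm in
  let C := \det M *: 1%:M - Rm *m \adj M *m Q in
  let H := block_mx (H1 *m M) 0 0 (Q^T *m H1 *m Q + C^T *m C) in
  H^T = H /\ pdm H /\ H *m block_mx 0 Q Rm 0 = (block_mx 0 Q Rm 0)^T *m H.
Proof.
move=> H1s H1p Ms Mp M C H.
have detM : \det M != 0.
  apply/negP => /eqP d0.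
  have : \det M^T == 0 by rewrite det_tr d0.
  move/det0P => [v nv vM].
  have Mv : M *m v^T = 0 by rewrite -[M]trmxK -trmx_mul vM trmx0.
  have := Mp v nv; rewrite /qf -mulmxA Mv !mulmx0 mxE ltxx //.
have CR : C *m Rm = 0.
  rewrite /C mulmxBl -scalemxAl mul1mx -!mulmxA mul_adj_mx mul_mx_scalar.
  by rewrite subrr.
have MtH : M^T *m H1 = H1 *m M by rewrite -[RHS]Ms [RHS]trmx_mul; congr (_ *m _); apply/esym; exact: H1s.
split.
  rewrite /H tr_block_mx !trmx0 Ms; congr block_mx.
  rewrite linearD /= !trmx_mul !trmxK mulmxA; congr (_ *m _ + _); congr (_ *m _); exact: H1s.
split.
  move=> v nv; rewrite /H qf_block.
  set a := lsubmx v; set b := rsubmx v.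
  have qB : qf b (Q^T *m H1 *m Q + C^T *m C) =
            qf (b *m Q^T) H1 + ((b *m C^T) *m (b *m C^T)^T) 0 0.
    rewrite /qf !trmx_mul !trmxK mulmxDl mulmxDr mxE; congr (_ + _); by rewrite !mulmxA.
  have [a0|na] := eqVneq a 0.
    have nb : b != 0.
      apply: contra nv => /eqP b0; apply/eqP; by rewrite -(hsubmxK v) -/a -/b a0 b0 row_mx0.
    rewrite a0 {1}/qf mul0mx mxE add0r qB.
    have [bQ|nbQ] := eqVneq (b *m Q^T) 0.
      rewrite bQ {1}/qf mul0mx mxE add0r; apply: sq_gt0.
      have -> : b *m C^T = \det M *: b.
        rewrite /C linearD /= linearN /= trmx_mul trmx_mul mulmxDr mulmxN !mulmxA bQ !mul0mx subr0.
        by rewrite linearZ /= trmx1 -scalemxAr mulmx1.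
      by rewrite scaler_eq0 negb_or detM.
    apply: ltr_wpDr; [exact: sq_ge0 | exact: H1p].
  apply: ltr_wpDr; last exact: Mp.
  rewrite qB; apply: addr_ge0; [exact: pdm_ge0 | exact: sq_ge0].
rewrite /H tr_block_mx !trmx0 !mulmx_block !mul0mx !mulmx0 !addr0 !add0r.
congr block_mx.
  rewrite mulmxDr !mulmxA -!trmx_mul CR trmx0 mul0mx addr0.
  have E : (Q *m Rm)^T *m H1 = H1 *m (Q *m Rm) by exact: MtH.
  by rewrite E !mulmxA.
by rewrite mulmxDl -!mulmxA CR mulmx0 addr0.
Qed.

Set Implicit Arguments.
Unset Strict Implicit.

Definition smx r c (F : R3 -> 'M[R]_(r, c)) :=
  forall i j, smooth_S2 (fun k => F k i j).
Arguments smx {r c}.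

Lemma smooth_sum (I : Type) (s : seq I) (P : pred I) (F : I -> R3 -> R) :
  (forall i, smooth_S2 (F i)) -> smooth_S2 (fun k => \sum_(i <- s | P i) F i k).
Proof.
move=> HF; elim: s => [|x s IH].
  apply: (smooth_ext (fun _ => 0)); [exact: smooth_const | by move=> k _; rewrite big_nil].
case Px: (P x).
  apply: (smooth_ext (fun k => F x k + \sum_(i <- s | P i) F i k)).
    exact: smooth_plus.
  by move=> k _; rewrite big_cons Px.
apply: (smooth_ext _ _ IH) => k _; by rewrite big_cons Px.
Qed.

Lemma smooth_prod (I : Type) (s : seq I) (P : pred I) (F : I -> R3 -> R) :
  (forall i, smooth_S2 (F i)) -> smooth_S2 (fun k => \prod_(i <- s | P i) F i k).
Proof.
move=> HF; elim: s => [|x s IH].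
  apply: (smooth_ext (fun _ => 1)); [exact: smooth_const | by move=> k _; rewrite big_nil].
case Px: (P x).
  apply: (smooth_ext (fun k => F x k * \prod_(i <- s | P i) F i k)).
    exact: smooth_mult.
  by move=> k _; rewrite big_cons Px.
apply: (smooth_ext _ _ IH) => k _; by rewrite big_cons Px.
Qed.

Lemma smx_tomx r c F : smooth_mat r c F -> smx (fun k => tomx r c (F k)).
Proof.
move=> H i j; apply: (smooth_ext (fun k => F k i j)).
  by apply: H; apply/ssrnat.ltP.
by move=> k _; rewrite mxE.
Qed.

Lemma smx_const r c (A : 'M[R]_(r, c)) : smx (fun _ => A).
Proof. move=> i j; exact: smooth_const. Qed.

Lemma smx_mul r p c (F : R3 -> 'M[R]_(r, p)) (G : R3 -> 'M[R]_(p, c)) :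
  smx F -> smx G -> smx (fun k => F k *m G k).
Proof.
move=> HF HG i j.
apply: (smooth_ext (fun k => \sum_(l < p) F k i l * G k l j)).
  apply: smooth_sum => l; exact: smooth_mult.
by move=> k _; rewrite mxE.
Qed.

Lemma smx_add r c (F G : R3 -> 'M[R]_(r, c)) :
  smx F -> smx G -> smx (fun k => F k + G k).
Proof.
move=> HF HG i j; apply: (smooth_ext (fun k => F k i j + G k i j)).
  exact: smooth_plus.
by move=> k _; rewrite mxE.
Qed.

Lemma smx_opp r c (F : R3 -> 'M[R]_(r, c)) : smx F -> smx (fun k => - F k).
Proof.
move=> HF i j; apply: (smooth_ext (fun k => Ropp (F k i j))).
  exact: smooth_opp.
by move=> k _; rewrite mxE.
Qed.

Lemma smx_scale r c (a : R3 -> R) (F : R3 -> 'M[R]_(r, c)) :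
  smooth_S2 a -> smx F -> smx (fun k => a k *: F k).
Proof.
move=> Ha HF i j; apply: (smooth_ext (fun k => a k * F k i j)).
  exact: smooth_mult.
by move=> k _; rewrite mxE.
Qed.

Lemma smx_tr r c (F : R3 -> 'M[R]_(r, c)) : smx F -> smx (fun k => (F k)^T).
Proof.
move=> HF i j; apply: (smooth_ext (fun k => F k j i)); first exact: HF.
by move=> k _; rewrite mxE.
Qed.

Lemma smx_block r1 r2 c1 c2 (A : R3 -> 'M[R]_(r1, c1)) (B : R3 -> 'M[R]_(r1, c2))
  (C : R3 -> 'M[R]_(r2, c1)) (D : R3 -> 'M[R]_(r2, c2)) :
  smx A -> smx B -> smx C -> smx D -> smx (fun k => block_mx (A k) (B k) (C k) (D k)).
Proof.
move=> HA HB HC HD i j.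
case: (splitP i) => i' Ei; case: (splitP j) => j' Ej.
- apply: (smooth_ext _ _ (HA i' j')) => k _.
  by rewrite /block_mx /col_mx /row_mx mxE; case: splitP => [i'' Ei'|i'' Ei'];
     rewrite mxE; case: splitP => [j'' Ej'|j'' Ej']; rewrite ?mxE;
     try (congr (_ _ _); apply: ord_inj; lia); exfalso; move: (ltn_ord i') (ltn_ord j') (ltn_ord i'') (ltn_ord j''); lia.
- apply: (smooth_ext _ _ (HB i' j')) => k _.
  by rewrite /block_mx /col_mx /row_mx mxE; case: splitP => [i'' Ei'|i'' Ei'];
     rewrite mxE; case: splitP => [j'' Ej'|j'' Ej']; rewrite ?mxE;
     try (congr (_ _ _); apply: ord_inj; lia); exfalso; move: (ltn_ord i') (ltn_ord j') (ltn_ord i'') (ltn_ord j''); lia.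
- apply: (smooth_ext _ _ (HC i' j')) => k _.
  by rewrite /block_mx /col_mx /row_mx mxE; case: splitP => [i'' Ei'|i'' Ei'];
     rewrite mxE; case: splitP => [j'' Ej'|j'' Ej']; rewrite ?mxE;
     try (congr (_ _ _); apply: ord_inj; lia); exfalso; move: (ltn_ord i') (ltn_ord j') (ltn_ord i'') (ltn_ord j''); lia.
- apply: (smooth_ext _ _ (HD i' j')) => k _.
  by rewrite /block_mx /col_mx /row_mx mxE; case: splitP => [i'' Ei'|i'' Ei'];
     rewrite mxE; case: splitP => [j'' Ej'|j'' Ej']; rewrite ?mxE;
     try (congr (_ _ _); apply: ord_inj; lia); exfalso; move: (ltn_ord i') (ltn_ord j') (ltn_ord i'') (ltn_ord j''); lia.
Qed.

Lemma smooth_det n (F : R3 -> 'M[R]_n) : smx F -> smooth_S2 (fun k => \det (F k)).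
Proof.
move=> HF; apply: smooth_sum => s; apply: smooth_mult; first exact: smooth_const.
apply: smooth_prod => i; exact: HF.
Qed.

Lemma smx_adj n (F : R3 -> 'M[R]_n) : smx F -> smx (fun k => \adj (F k)).
Proof.
move=> HF i j; apply: (smooth_ext (fun k => (-1) ^+ (j + i) * \det (row' j (col' i (F k))))).
  apply: smooth_mult; first exact: smooth_const.
  apply: smooth_det => a b; apply: (smooth_ext _ _ (HF (lift j a) (lift i b))).
  by move=> k _; rewrite !mxE.
by move=> k _; rewrite mxE.
Qed.

Lemma qf_rsum N A (x : nat -> R) :
  rsum N (fun i => x i * rsum N (fun j => A i j * x j)) = qf (\row_(i < N) x i) (tomx N N A).
Proof.
rewrite /qf mxE rsum_big; apply: eq_bigr => i _.
rewrite !mxE rsum_big; congr (_ * _); apply: eq_bigr => j _; by rewrite !mxE.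
Qed.

Lemma pos_def_pdm N A : pos_def N A -> pdm (tomx N N A).
Proof.
move=> H v nv.
set x := fun i => match (insub i : option 'I_N) with Some i' => v 0 i' | None => 0 end.
have Hv : \row_(i < N) x i = v by apply/rowP => i; rewrite mxE /x valK.
have [i vi] : exists i : 'I_N, v 0 i != 0.
  apply/existsP; apply: contraR nv; rewrite negb_exists => /forallP H0.
  by apply/eqP/rowP => i; rewrite mxE; have := H0 i; rewrite negbK => /eqP.
have := H x; rewrite qf_rsum Hv => Hx; apply/RltP; apply: Hx.
exists i; split; first by apply/ssrnat.ltP.
by rewrite /x valK; apply/eqP.
Qed.

Lemma pdm_pos_def N (A : 'M[R]_N) : pdm A -> pos_def N (ofmx A).
Proof.
move=> H x [i [Hi xi]]; rewrite qf_rsum ofmxK; apply/RltP; apply: H.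
have Hi' : (i < N)%N by apply/ssrnat.ltP.
apply/negP => /eqP v0.
have := congr1 (fun v : 'rV_N => v 0 (Ordinal Hi')) v0; rewrite !mxE /=.
exact: xi.
Qed.

Lemma sym_tomx N A : Defs.symmetric N A -> (tomx N N A)^T = tomx N N A.
Proof. by move=> H; apply/matrixP => i j; rewrite !mxE; apply: H; apply/ssrnat.ltP. Qed.

Lemma tr_sym N (A : 'M[R]_N) : A^T = A -> Defs.symmetric N (ofmx A).
Proof.
move=> H i j Hi Hj.
have Hi' : (i < N)%N by apply/ssrnat.ltP. have Hj' : (j < N)%N by apply/ssrnat.ltP.
rewrite (ofmxE _ _ A (Ordinal Hi') (Ordinal Hj')) (ofmxE _ _ A (Ordinal Hj') (Ordinal Hi')).
by rewrite -{1}H mxE.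
Qed.

Lemma tomx_tr N A : tomx N N (mtr A) = (tomx N N A)^T.
Proof. by apply/matrixP => i j; rewrite !mxE. Qed.

Definition Cmx n m (Qm : 'M[R]_(n, m)) (Rmm : 'M[R]_(m, n)) : 'M[R]_m :=
  \det (Qm *m Rmm) *: 1%:M - Rmm *m \adj (Qm *m Rmm) *m Qm.

Definition Hmx n m (Qm : 'M[R]_(n, m)) (Rmm : 'M[R]_(m, n)) (H1m : 'M[R]_n) : 'M[R]_(n + m) :=
  block_mx (H1m *m (Qm *m Rmm)) 0 0 (Qm^T *m H1m *m Qm + (Cmx Qm Rmm)^T *m Cmx Qm Rmm).

Lemma part_b n m (Q R' : R3 -> mat) :
  smooth_mat n m Q -> smooth_mat m n R' ->
  (exists H1 : R3 -> mat,
      smooth_mat n n H1 /\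
      forall k, S2 k ->
        sym_pos_def n (H1 k) /\
        sym_pos_def n (mmul n (H1 k) (mmul m (Q k) (R' k)))) ->
   exists H : R3 -> mat,
     smooth_mat (n + m) (n + m) H /\
     forall k, S2 k ->
       sym_pos_def (n + m) (H k) /\
       mat_eq (n + m) (n + m)
         (mmul (n + m) (H k) (blockP n (Q k) (R' k)))
         (mmul (n + m) (mtr (blockP n (Q k) (R' k))) (H k)).
Proof.
move=> sQ sR [H1 [sH1 HH1]].
set F := fun k => Hmx (tomx n m (Q k)) (tomx m n (R' k)) (tomx n n (H1 k)).
exists (fun k => ofmx (F k)); split.
  move=> i j Hi Hj.
  have Hi' : (i < n + m)%N by apply/ssrnat.ltP. have Hj' : (j < n + m)%N by apply/ssrnat.ltP.
  apply: (smooth_ext (fun k => F k (Ordinal Hi') (Ordinal Hj'))); last first.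
    by move=> k _; exact: (esym (ofmxE _ _ (F k) (Ordinal Hi') (Ordinal Hj'))).
  have sQm := smx_tomx sQ. have sRm := smx_tomx sR.
  have sHm := smx_tomx sH1.
  have sM := smx_mul sQm sRm.
  have sC : smx (fun k => Cmx (tomx n m (Q k)) (tomx m n (R' k))).
    apply: smx_add; first exact: (smx_scale (smooth_det sM) (smx_const _)).
    apply: smx_opp; apply: smx_mul; last exact: sQm.
    apply: smx_mul; first exact: sRm. exact: smx_adj.
  apply: smx_block.
  - exact: smx_mul.
  - exact: smx_const.
  - exact: smx_const.
  - apply: smx_add; first by apply: smx_mul; first apply: smx_mul; first apply: smx_tr.
    by apply: smx_mul; first apply: smx_tr.
move=> k Sk; have [[sy1 pd1] [sy2 pd2]] := HH1 k Sk.
have H1s := sym_tomx sy1. have H1p := pos_def_pdm pd1.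
have Ms := sym_tomx sy2. have Mp := pos_def_pdm pd2.
rewrite !tomx_mul in Ms Mp.
have [Hs [Hp HP]] := part_b_core _ _ _ _ _ H1s H1p Ms Mp.
split; first split.
- exact: tr_sym.
- exact: pdm_pos_def.
apply/mat_eq_tomx; rewrite !tomx_mul tomx_tr ofmxK tomx_blockP.
exact: HP.
Qed.

Open Scope R_scope.

Theorem lemma1 (n m : nat) (Q R' : R3 -> mat) :
  (1 <= n)%coq_nat -> (n <= m)%coq_nat ->
  smooth_mat n m Q -> smooth_mat m n R' ->
  (* (a) *)
  (forall k, S2 k ->
     forall (SM : mat) (mu : nat -> R),
       diagonalizes n (mmul m (Q k) (R' k)) SM mu ->
       (forall j, (j < n)%coq_nat -> 0 < mu j) ->
       exists (SP : mat) (lam : nat -> R),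
         diagonalizes (n + m) (blockP n (Q k) (R' k)) SP lam /\
         forall i, (i < n + m)%coq_nat ->
           lam i = 0 \/
           exists j, (j < n)%coq_nat /\ (lam i = sqrt (mu j) \/ lam i = - sqrt (mu j)))
  /\
  (* (b) *)
  ((exists H1 : R3 -> mat,
      smooth_mat n n H1 /\
      forall k, S2 k ->
        sym_pos_def n (H1 k) /\
        sym_pos_def n (mmul n (H1 k) (mmul m (Q k) (R' k)))) ->
   exists H : R3 -> mat,
     smooth_mat (n + m) (n + m) H /\
     forall k, S2 k ->
       sym_pos_def (n + m) (H k) /\
       mat_eq (n + m) (n + m)
         (mmul (n + m) (H k) (blockP n (Q k) (R' k)))
         (mmul (n + m) (mtr (blockP n (Q k) (R' k))) (H k))).
Proof.
move=> Hn _ sQ sR; split.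
- move=> k _ SM mu Hd Hpos. exact: (part_a _ _ _ _ Hn SM mu Hd Hpos).
- exact: (part_b sQ sR).
Qed.
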